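(* The subspace topology induced on $D(G,K)\subseteq\mathcal R(G,K)$ by the nice topology of $\mathcal R(G,K)$ coincides with the canonical Fréchet topology of $D(G,K)$ (defined by the norms $\|\cdot\|_\rho$, $p^{-1}<\rho<1$).
   Context: $p$ is an odd prime and $K$ is a complete discretely valued field with $\mathbb Q_p\subseteq K\subseteq\mathbb C_p$, $o_K$ its ring of integers. $G$ is a uniform pro-$p$ group of dimension $d$ with an ordered minimal system of topological generators $h_1,\dots,h_d$; $b_i=h_i-1$. For $\alpha\in\mathbb Z^d$ write $\mathbf b^\alpha=b_1^{\alpha_1}\cdots b_d^{\alpha_d}$ and $\deg\alpha=\alpha_1+\dots+\alpha_d$. $D(G,K)$ is the ring of series $\sum_{\alpha\in\mathbb N_0^d}d_\alpha\mathbf b^\alpha$ with $\{|d_\alpha|\rho^{\deg\alpha}\}$ bounded for all $0<\rho<1$; for $\rho\in p^{\mathbb Q}\cap(p^{-1},1)$, $\|\cdot\|_\rho=\sup_\alpha|d_\alpha|\rho^{\deg\alpha}$ and $D_\rho(G,K)$ is the completion. For $r_0\le r$ in $p^{\mathbb Q}\cap(p^{-1},1)$, $D_{[r_0,r]}(G,K)$ is the $K$-Banach algebra obtained from $A=D_r(G,K)$ by generalized microlocalization at the multiplicative monoid $S$ generated by $b_1,\dots,b_d$ with respect to the two norms $\|\cdot\|_{r_0},\|\cdot\|_r$: with $S_i=\{a:|at-s|_i<|s|_i\text{ for some }s,t\in S\}$, $\Delta_i((s,a),(t,b))=|s|_i^{-1}|t|_i^{-1}|at-sb|_i$, $d_i(x,y)=\inf_{\xi\in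 S_i\times A}\max(\Delta_i(x,\xi),\Delta_i(y,\xi))$, $d=\max(d_1,d_2)$, it is the Hausdorff completion of $(S\times A,d)$ with its natural Banach algebra structure in which $(s,a)$ becomes $s^{-1}a$ and $S$ becomes invertible; $D(G,K)\subseteq D_r(G,K)\subseteq D_{[r_0,r]}(G,K)$. Its elements are exactly the convergent Laurent series $\sum_{\alpha\in\mathbb Z^d}d_\alpha\mathbf b^\alpha$ with $|d_\alpha|r_0^{\deg\alpha},|d_\alpha|r^{\deg\alpha}\to0$ as $\sum_i|\alpha_i|\to\infty$. $D_{[r,1)}(G,K)=\varprojlim_{r''\to1}D_{[r,r'']}(G,K)$ and $\mathcal R(G,K)=\varinjlim_{r\to1}D_{[r,1)}(G,K)$. Nice topology: for $x_0=\sum_\alpha c_{0,\alpha}\mathbf b^\alpha\in\mathcal R(G,K)$ let $L_{x_0}=\{\sum_\alpha d_\alpha\mathbf b^\alpha\in\mathcal R(G,K):|c_{0,-\alpha}||d_\alpha|\le1\ \forall\alpha\in\mathbb Z^d\}$; the nice topology is the locally convex topology on $\mathcal R(G,K)$ in which an $o_K$-lattice is open iff it contains some $L_{x_0}$. *)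

(* Defs.v *)
From HB Require Import structures.
From mathcomp Require Import all_boot all_order all_algebra.
From Stdlib Require Import Reals.
Set Implicit Arguments. Unset Strict Implicit. Unset Printing Implicit Defensive.
Import GRing.Theory.
Local Open Scope ring_scope.

Definition rpow_int (r : R) (n : int) : R :=
  match n with Posz k => pow r k | Negz k => Rinv (pow r (S k)) end.

Definition in_pQ (p : nat) (r : R) : Prop :=
  exists (a : Z) (b : nat), leq 1 b /\ pow r b = powerRZ (INR p) a.

Definition good_radius (p : nat) (r : R) : Prop :=
  in_pQ p r /\ Rlt (Rinv (INR p)) r /\ Rlt r R1.

(* K is a complete discretely valued field with Q_p ⊆ K ⊆ C_p, via its
   absolute value abs extending the p-adic one. *)
Record padic_field (p : nat) (K : fieldType) (abs : K -> R) : Prop := {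
  pf_abs0 : forall x, abs x = R0 <-> x = 0;
  pf_absM : forall x y, abs (x * y) = Rmult (abs x) (abs y);
  pf_ultra : forall x y, Rle (abs (x + y)) (Rmax (abs x) (abs y));
  pf_abs_p : abs (p%:R) = Rinv (INR p);
  pf_discrete : exists e : nat, leq 1 e /\
      forall x, x <> 0 -> exists k : Z, pow (abs x) e = powerRZ (INR p) k;
  pf_complete : forall u : nat -> K,
      (forall eps, Rlt R0 eps -> exists N, forall m n, leq N m -> leq N n ->
          Rlt (abs (u m - u n)) eps) ->
      exists l, forall eps, Rlt R0 eps -> exists N, forall n, leq N n ->
          Rlt (abs (u n - l)) eps;
  (* residue field algebraic over F_p (this, with the above, encodes K ⊆ C_p) *)
  pf_residue_alg : forall x, Rle (abs x) R1 ->
      exists f : {poly int}, f \is monic /\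
        Rlt (abs (map_poly (fun z : int => z%:~R : K) f).[x]) R1
}.

Definition Zd (d : nat) := {ffun 'I_d -> int}.
Definition degZ d (a : Zd d) : int := \sum_(i < d) a i.
Definition norm1 d (a : Zd d) : nat := \sum_(i < d) absz (a i).
Definition nonneg d (a : Zd d) : bool := [forall i, 0 <= a i].
Definition negZd d (a : Zd d) : Zd d := [ffun i => - a i].

(* Coefficient families: the element sum_alpha c_alpha b^alpha. *)
Definition coefs (K : Type) (d : nat) := Zd d -> K.

Definition cadd (K : fieldType) d (x y : coefs K d) : coefs K d := fun a => x a + y a.
Definition csub (K : fieldType) d (x y : coefs K d) : coefs K d := fun a => x a - y a.
Definition cscale (K : fieldType) d (c : K) (x : coefs K d) : coefs K d := fun a => c * x a.
Definition czero (K : fieldType) d : coefs K d := fun _ => 0.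

Definition tends0 d (f : Zd d -> R) : Prop :=
  forall eps, Rlt R0 eps -> exists N : nat, forall a, ltn N (norm1 a) -> Rlt (f a) eps.

(* D(G,K): power series in b_1..b_d with |d_alpha| rho^deg bounded for all 0<rho<1
   (coefficients indexed by Z^d, vanishing off N^d, so that D ⊆ R literally). *)
Definition in_D (K : fieldType) (abs : K -> R) d (x : coefs K d) : Prop :=
  (forall a, ~~ nonneg a -> x a = 0) /\
  forall rho, Rlt R0 rho -> Rlt rho R1 ->
    exists M, forall a, Rle (Rmult (abs (x a)) (rpow_int rho (degZ a))) M.

(* R(G,K) = colim_{r->1} lim_{r''->1} D_[r,r''](G,K): Laurent series. *)
Definition in_Robba p (K : fieldType) (abs : K -> R) d (x : coefs K d) : Prop :=
  exists r, good_radius p r /\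
    forall r'', good_radius p r'' -> Rle r r'' ->
      tends0 (fun a => Rmult (abs (x a)) (rpow_int r (degZ a))) /\
      tends0 (fun a => Rmult (abs (x a)) (rpow_int r'' (degZ a))).

Definition Lx0 p (K : fieldType) (abs : K -> R) d (x0 : coefs K d) (x : coefs K d)
  : Prop :=
  in_Robba p abs x /\ forall a, Rle (Rmult (abs (x0 (negZd a))) (abs (x a))) R1.

Definition is_lattice p (K : fieldType) (abs : K -> R) d (L : coefs K d -> Prop)
  : Prop :=
  (forall x, L x -> in_Robba p abs x) /\
  L (@czero K d) /\
  (forall x y, L x -> L y -> L (cadd x y)) /\
  (forall c x, Rle (abs c) R1 -> L x -> L (cscale c x)) /\
  (forall x, in_Robba p abs x -> exists c, c <> 0 /\ L (cscale c x)).

Definition nice_open_lattice p (K : fieldType) (abs : K -> R) d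
  (L : coefs K d -> Prop) : Prop :=
  is_lattice p abs L /\
  exists x0, in_Robba p abs x0 /\ forall x, Lx0 p abs x0 x -> L x.

Definition nice_open p (K : fieldType) (abs : K -> R) d (V : coefs K d -> Prop)
  : Prop :=
  (forall x, V x -> in_Robba p abs x) /\
  forall v, V v -> exists L, nice_open_lattice p abs L /\
     forall y, in_Robba p abs y -> L (csub y v) -> V y.

Definition D_subspace_open p (K : fieldType) (abs : K -> R) d
  (W : coefs K d -> Prop) : Prop :=
  exists V, nice_open p abs V /\ forall x, in_D abs x -> (W x <-> V x).

Definition rho_ball (K : fieldType) (abs : K -> R) d (rho eps : R) (x : coefs K d)
  : Prop :=
  forall a, Rle (Rmult (abs (x a)) (rpow_int rho (degZ a))) eps.

Definition frechet_open p (K : fieldType) (abs : K -> R) d (W : coefs K d -> Prop)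
  : Prop :=
  forall x, W x -> exists (rs : list R) (eps : R), Rlt R0 eps /\
    (forall rho, List.In rho rs -> good_radius p rho) /\
    forall y, in_D abs y ->
      (forall rho, List.In rho rs -> rho_ball abs rho eps (csub y x)) -> W y.

(* Main.v *)
From Pilot Require Import Defs.
From HB Require Import structures.
From mathcomp Require Import all_boot all_order all_algebra.
From Stdlib Require Import Reals Lra Lia Psatz FunctionalExtensionality.
Import Pilot.Defs.
Set Implicit Arguments. Unset Strict Implicit. Unset Printing Implicit Defensive.
Import GRing.Theory Num.Theory.
Open Scope ring_scope.

Lemma norm1_neg d (a : Zd d) : norm1 (negZd a) = norm1 a.
Proof. by rewrite /norm1; apply: eq_bigr => i _; rewrite ffunE abszN. Qed.

Lemma negZdK d (a : Zd d) : negZd (negZd a) = a.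
Proof. by apply/ffunP => i; rewrite !ffunE opprK. Qed.

Lemma degZ_neg d (a : Zd d) : degZ (negZd a) = - degZ a.
Proof. by rewrite /degZ -sumrN; apply: eq_bigr => i _; rewrite ffunE. Qed.

Lemma degZ_nonneg d (a : Zd d) : nonneg a -> degZ a = Posz (norm1 a).
Proof.
move/forallP=> h; rewrite /degZ /norm1.
have -> : Posz (\sum_(i < d) absz (a i)) = \sum_(i < d) Posz (absz (a i)).
  by rewrite -natz natr_sum; apply: eq_bigr => i _; rewrite natz.
by apply: eq_bigr => i _; rewrite gez0_abs.
Qed.

Lemma absz_le_norm1 d (a : Zd d) i : (absz (a i) <= norm1 a)%nat.
Proof. by rewrite /norm1 (bigD1 i) //= leq_addr. Qed.

Lemma rpow_pos r z : Rlt R0 r -> Rlt R0 (rpow_int r z).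
Proof.
move=> hr; case: z => n; first by apply pow_lt.
by apply Rinv_0_lt_compat; apply pow_lt.
Qed.

Lemma rpow_negnat r n : rpow_int r (- Posz n) = Rinv (pow r n).
Proof.
case: n => [|n]; first by rewrite oppr0 /= Rinv_1.
by rewrite -NegzE.
Qed.

Lemma fold_max_ge (T : eqType) (F : T -> R) (s : seq T) x :
  x \in s -> Rle (F x) (List.fold_right Rmax R0 (map F s)).
Proof.
elim: s => [|y s IH] //=; rewrite in_cons => /orP [/eqP ->|hx].
  exact: Rmax_l.
exact: Rle_trans (IH hx) (Rmax_r _ _).
Qed.

Lemma fin_bound d (f : Zd d -> R) (N : nat) :
  exists M, forall a, (norm1 a <= N)%nat -> Rle (f a) M.
Proof.
pose T := {ffun 'I_d -> ('I_N.+1 * bool)%type}.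
pose dec (g : T) : Zd d :=
  [ffun i => if (g i).2 then - Posz (g i).1 else Posz (g i).1].
exists (List.fold_right Rmax R0 (map (fun g => f (dec g)) (enum T))).
move=> a ha.
pose g : T := [ffun i => match a i with
   Posz k => (inord k, false) | Negz k => (inord k.+1, true) end].
have -> : a = dec g.
  apply/ffunP => i; rewrite /dec !ffunE.
  have := leq_trans (absz_le_norm1 a i) ha.
  case: (a i) => k /= hk.
    by rewrite inordK.
  by rewrite inordK // NegzE.
by apply: (fold_max_ge (fun g => f (dec g))); rewrite mem_enum.
Qed.

Lemma tends0_bound d (f : Zd d -> R) : tends0 f ->
  exists M, forall a, Rle (f a) M.
Proof.
move=> h; have [N hN] := h R1 Rlt_0_1.
have [M hM] := fin_bound f N.
exists (Rmax R1 M) => a.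
case: (leqP (norm1 a) N) => ha.
  exact: Rle_trans (hM a ha) (Rmax_r _ _).
by apply: Rle_trans (Rmax_l _ _); apply: Rlt_le; apply: hN.
Qed.
Lemma abs1 p (K : fieldType) (abs : K -> R) : padic_field p abs -> abs 1 = R1.
Proof.
move=> hK; have h := pf_absM hK 1 1; rewrite mulr1 in h.
have hn : abs 1 <> R0 by move/(pf_abs0 hK)=> /eqP; rewrite oner_eq0.
set a := abs 1 in h hn *.
have : Rmult a (Rminus a R1) = R0 by rewrite /Rminus Rmult_plus_distr_l -h; lra.
case/Rmult_integral => //; lra.
Qed.

Lemma INR_p_ge2 p : prime p -> Rle (INR 2) (INR p).
Proof.
move=> hp; have := prime_gt1 hp => /leP h.
apply: le_INR; lia.
Qed.

Lemma absN1 p (K : fieldType) (abs : K -> R) : prime p -> padic_field p abs -> abs (-1) = R1.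
Proof.
move=> hp hK.
have h1 := abs1 hK.
have hs : Rmult (abs (-1)) (abs (-1)) = R1 by rewrite -(pf_absM hK) mulrNN mulr1.
have : Rmult (Rminus (abs (-1)) R1) (Rplus (abs (-1)) R1) = R0 by nra.
case/Rmult_integral; [lra|move=> hm].
have hm1 : abs (-1) = Ropp R1 by lra.
have ind : forall k : nat, Rle (abs (- (k.+1)%:R)) (Ropp R1).
  elim=> [|k IH]; first by rewrite hm1; lra.
  rewrite -addn1 natrD opprD addrC.
  apply: Rle_trans (pf_ultra hK _ _) _.
  apply: Rmax_lub; [ | exact: IH]. rewrite hm1; lra.
have hp0 : is_true (leq 1 p) by exact: prime_gt0.
have := ind p.-1; rewrite prednK //.
rewrite -mulN1r (pf_absM hK) hm1 (pf_abs_p hK).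
have := INR_p_ge2 hp => h2.
have : Rle (Rinv (INR p)) (Rinv (INR 2)) by apply: Rinv_le_contravar; simpl in *; lra.
simpl in *.
lra.
Qed.

Lemma abs_ge0 p (K : fieldType) (abs : K -> R) : prime p -> padic_field p abs ->
  forall x, Rle R0 (abs x).
Proof.
move=> hp hK x.
have := pf_ultra hK x (-x); rewrite subrr.
have -> : abs 0 = R0 by apply/(pf_abs0 hK).
rewrite -mulN1r (pf_absM hK) (absN1 hp hK) Rmult_1_l Rmax_left; lra.
Qed.

Lemma abs_opp p (K : fieldType) (abs : K -> R) : prime p -> padic_field p abs ->
  forall x, abs (- x) = abs x.
Proof. by move=> hp hK x; rewrite -mulN1r (pf_absM hK) (absN1 hp hK) Rmult_1_l. Qed.

Lemma abs_0 p (K : fieldType) (abs : K -> R) : padic_field p abs -> abs 0 = R0.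
Proof. by move=> hK; apply/(pf_abs0 hK). Qed.

Lemma abs_pX p (K : fieldType) (abs : K -> R) : padic_field p abs ->
  forall k, abs ((p%:R : K) ^+ k) = pow (Rinv (INR p)) k.
Proof.
move=> hK; elim=> [|k IH]; first by rewrite expr0 (abs1 hK).
by rewrite exprS (pf_absM hK) IH (pf_abs_p hK).
Qed.

Lemma abs_inv p (K : fieldType) (abs : K -> R) : padic_field p abs ->
  forall x : K, x <> 0 -> abs (x^-1) = Rinv (abs x).
Proof.
move=> hK x hx.
have h : Rmult (abs x) (abs x^-1) = R1 by rewrite -(pf_absM hK) mulfV ?(abs1 hK) //; apply/eqP.
have hx0 : abs x <> R0 by move/(pf_abs0 hK).
field_simplify_eq; [lra| exact hx0] || (rewrite -h; field; exact hx0).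
Qed.

Lemma good_pos p r : prime p -> good_radius p r -> Rlt R0 r /\ Rlt r R1.
Proof.
move=> hp [_ [h1 h2]]; have := INR_p_ge2 hp => h; simpl in h.
split=> //; apply: Rlt_trans h1; apply Rinv_0_lt_compat; lra.
Qed.

Lemma Rmax_mult_le u v c : Rle R0 c -> Rle (Rmult (Rmax u v) c) (Rmax (Rmult u c) (Rmult v c)).
Proof.
move=> hc; unfold Rmax; destruct (Rle_dec u v); destruct (Rle_dec (Rmult u c) (Rmult v c)); nra.
Qed.

Lemma tends0_max d (f g h : Zd d -> R) : tends0 f -> tends0 g ->
  (forall a, Rle (h a) (Rmax (f a) (g a))) -> tends0 h.
Proof.
move=> hf hg hh eps he.
have [N1 h1] := hf eps he; have [N2 h2] := hg eps he.
exists (maxn N1 N2) => a ha.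
apply: Rle_lt_trans (hh a) _; apply: Rmax_lub_lt.
  by apply: h1; apply: leq_ltn_trans ha; rewrite leq_maxl.
by apply: h2; apply: leq_ltn_trans ha; rewrite leq_maxr.
Qed.

Lemma robba_dom p (K : fieldType) (abs : K -> R) d (x y z : coefs K d) :
  prime p ->
  (forall a, Rle (abs (z a)) (Rmax (abs (x a)) (abs (y a)))) ->
  in_Robba p abs x -> in_Robba p abs y -> in_Robba p abs z.
Proof.
move=> hp hz [rx [grx hx]] [ry [gry hy]].
have hmax : forall rr, Rlt R0 rr -> forall a,
  Rle (Rmult (abs (z a)) (rpow_int rr (degZ a)))
      (Rmax (Rmult (abs (x a)) (rpow_int rr (degZ a))) (Rmult (abs (y a)) (rpow_int rr (degZ a)))).
  move=> rr hrr a; apply: Rle_trans (Rmax_mult_le _ _ _); last by apply: Rlt_le; apply: rpow_pos.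
  by apply: Rmult_le_compat_r; [apply: Rlt_le; apply: rpow_pos|].
exists (Rmax rx ry); split; first by apply: Rmax_case.
move=> r'' gr'' hle.
have hxr : Rle rx (Rmax rx ry) := Rmax_l _ _.
have hyr : Rle ry (Rmax rx ry) := Rmax_r _ _.
have gm : good_radius p (Rmax rx ry) by apply: Rmax_case.
have [_ hx1] := hx _ gm hxr; have [_ hy1] := hy _ gm hyr.
have [_ hx2] := hx _ gr'' (Rle_trans _ _ _ hxr hle).
have [_ hy2] := hy _ gr'' (Rle_trans _ _ _ hyr hle).
have [pm _] := good_pos hp gm; have [p2 _] := good_pos hp gr''.
split; [apply: (tends0_max hx1 hy1) => a; exact: (hmax _ pm) | apply: (tends0_max hx2 hy2) => a; exact: (hmax _ p2)].
Qed.

Lemma good_exists p : prime p -> good_radius p (sqrt (Rinv (INR p))).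
Proof.
move=> hp; have := INR_p_ge2 hp => h; simpl in h.
set t := Rinv (INR p).
have ht0 : Rlt R0 t by apply Rinv_0_lt_compat; lra.
have ht1 : Rlt t R1.
  have : Rmult t (INR p) = R1 by rewrite /t Rinv_l //; lra.
  nra.
have hs : Rmult (sqrt t) (sqrt t) = t by apply sqrt_sqrt; lra.
have hs0 : Rlt R0 (sqrt t) by apply sqrt_lt_R0.
have hs1 : Rlt (sqrt t) R1.
  nra.
split; last first. split; last exact hs1. change (Rlt t (sqrt t)). nra.
exists (Z.neg 1%positive), 2%nat; split=> //.
by rewrite /= Rmult_1_r hs Rmult_1_r.
Qed.

Lemma D_tends0 p (K : fieldType) (abs : K -> R) d (y : coefs K d) r :
  prime p -> padic_field p abs -> in_D abs y -> Rlt R0 r -> Rlt r R1 ->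
  tends0 (fun a => Rmult (abs (y a)) (rpow_int r (degZ a))).
Proof.
move=> hp hK [hy0 hyb] hr0 hr1.
set s := sqrt r.
have hs : Rmult s s = r by apply sqrt_sqrt; lra.
have hs0 : Rlt R0 s by apply sqrt_lt_R0.
have hs1 : Rlt s R1 by nra.
have [M hM] := hyb s hs0 hs1.
move=> eps he.
have hRa : Rlt (Rabs s) R1 by rewrite Rabs_right; lra.
have hpos : Rlt R0 (Rdiv eps (Rplus (Rabs M) R1)).
  apply Rdiv_lt_0_compat => //; have := Rabs_pos M; lra.
have [N hN] := pow_lt_1_zero s hRa _ hpos.
exists N => a ha.
case hna: (nonneg a); last first.
  rewrite hy0 ?hna // (abs_0 hK) Rmult_0_l; lra.
rewrite degZ_nonneg //=.
have hsn : Rlt (Rabs (pow s (norm1 a))) (Rdiv eps (Rplus (Rabs M) R1)).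
  apply: hN; apply/leP; exact: ltnW.
rewrite Rabs_right in hsn; last by apply Rle_ge, pow_le; lra.
have -> : pow r (norm1 a) = Rmult (pow s (norm1 a)) (pow s (norm1 a)) by rewrite -hs Rpow_mult_distr.
have hMa := hM a; rewrite degZ_nonneg //= in hMa.
have h0 := abs_ge0 hp hK (y a).
have hp0 : Rlt R0 (pow s (norm1 a)) by apply pow_lt.
have hM1 := Rle_abs M.
have hMp : Rlt R0 (Rplus (Rabs M) R1) by have := Rabs_pos M; lra.
have : Rlt (Rmult (pow s (norm1 a)) (Rplus (Rabs M) R1)) eps.
  move: hsn; rewrite /Rdiv => hsn.
  have := Rmult_lt_compat_r _ _ _ hMp hsn.
  by rewrite Rmult_assoc Rinv_l ?Rmult_1_r; lra.
nra.
Qed.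

Lemma D_robba p (K : fieldType) (abs : K -> R) d (y : coefs K d) :
  prime p -> padic_field p abs -> in_D abs y -> in_Robba p abs y.
Proof.
move=> hp hK hy; exists (sqrt (Rinv (INR p))); split; first exact: good_exists.
move=> r'' gr'' _; have [h0 h1] := good_pos hp (good_exists hp).
have [h2 h3] := good_pos hp gr''.
by split; apply: (D_tends0 hp hK hy).
Qed.

Lemma zero_robba p (K : fieldType) (abs : K -> R) d :
  prime p -> padic_field p abs -> in_Robba p abs (@czero K d).
Proof.
move=> hp hK; apply: D_robba => //; split=> // rho _ _.
by exists R0 => a; rewrite /czero (abs_0 hK) Rmult_0_l; apply Rle_refl.
Qed.

Lemma rpow_inv r z : Rlt R0 r -> Rmult (rpow_int r (- z)) (rpow_int r z) = R1.
Proof.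
move=> hr; have := pow_lt r; case: z => n hpw.
  by rewrite rpow_negnat Rinv_l //; have := hpw n hr; lra.
rewrite NegzE opprK /=.
by rewrite Rinv_r //; have := hpw n.+1 hr; simpl; lra.
Qed.

Lemma scale_abs_le p (K : fieldType) (abs : K -> R) d (c : K) (x : coefs K d) :
  prime p -> padic_field p abs -> Rle (abs c) R1 ->
  forall a, Rle (abs (cscale c x a)) (Rmax (abs (x a)) (abs (x a))).
Proof.
move=> hp hK hc a; rewrite /cscale (pf_absM hK) Rmax_left; last lra.
have := abs_ge0 hp hK (x a); have := abs_ge0 hp hK c; nra.
Qed.

Lemma Lx0_lattice p (K : fieldType) (abs : K -> R) d (x0 : coefs K d) :
  prime p -> padic_field p abs -> in_Robba p abs x0 -> is_lattice p abs (Lx0 p abs x0).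
Proof.
move=> hp hK hx0.
have hge := abs_ge0 hp hK.
split; first by move=> x [].
split.
  split; first exact: zero_robba.
  by move=> a; rewrite /czero (abs_0 hK) Rmult_0_r; lra.
split.
  move=> x y [hx bx] [hy by_]; split.
    by apply: (robba_dom hp _ hx hy) => a; apply: (pf_ultra hK).
  move=> a; rewrite /cadd.
  apply: Rle_trans (_ : Rle _ (Rmax (Rmult (abs (x0 (negZd a))) (abs (x a)))
                                    (Rmult (abs (x0 (negZd a))) (abs (y a))))) _.
    rewrite (Rmult_comm _ (abs (x a))) (Rmult_comm _ (abs (y a))) Rmult_comm.
    eapply Rle_trans; [|apply Rmax_mult_le; apply hge].
    by apply: Rmult_le_compat_r (hge _) _; apply: (pf_ultra hK).
  by apply: Rmax_lub.
split.
  move=> c x hc [hx bx]; split.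
    by apply: (robba_dom hp _ hx hx); apply: (scale_abs_le _ hp hK hc).
  move=> a; rewrite /cscale (pf_absM hK).
  have := bx a; have := hge (x a); have := hge (x0 (negZd a)); have := hge c; nra.
move=> x [rx [grx hx]].
case: hx0 => [r0 [gr0 h0]].
have gm : good_radius p (Rmax r0 rx) by apply: Rmax_case.
have [_ t0] := h0 _ gm (Rmax_l _ _).
have [_ tx] := hx _ gm (Rmax_r _ _).
have [M0 hM0] := tends0_bound t0; have [Mx hMx] := tends0_bound tx.
have [hm0 _] := good_pos hp gm.
set r := Rmax r0 rx in hm0 hM0 hMx.
have hB : forall a, Rle (Rmult (abs (x0 (negZd a))) (abs (x a))) (Rmax R1 (Rmult M0 Mx)).
  move=> a; apply: Rle_trans (Rmax_r _ _).
  have e := rpow_inv (degZ a) hm0.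
  have h1 := hM0 (negZd a); rewrite degZ_neg in h1.
  have h2 := hMx a.
  have p1 := rpow_pos (- degZ a) hm0; have p2 := rpow_pos (degZ a) hm0.
  have a1 := hge (x0 (negZd a)); have a2 := hge (x a).
  set u := rpow_int r (- degZ a) in e h1 p1; set v := rpow_int r (degZ a) in e h2 p2.
  have -> : Rmult (abs (x0 (negZd a))) (abs (x a)) =
            Rmult (Rmult (abs (x0 (negZd a))) u) (Rmult (abs (x a)) v).
    by rewrite -Rmult_assoc (Rmult_assoc _ u) (Rmult_comm u) -Rmult_assoc Rmult_assoc e Rmult_1_r.
  apply: Rmult_le_compat => //; apply: Rmult_le_pos => //; lra.
set B := Rmax R1 (Rmult M0 Mx) in hB.
have hB1 : Rle R1 B := Rmax_l _ _.
have h2 := INR_p_ge2 hp; simpl in h2.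
have hq0 : Rlt R0 (Rinv (INR p)) by apply Rinv_0_lt_compat; lra.
have hq1 : Rlt (Rinv (INR p)) R1.
  have : Rmult (Rinv (INR p)) (INR p) = R1 by rewrite Rinv_l //; lra.
  nra.
have hRa : Rlt (Rabs (Rinv (INR p))) R1 by rewrite Rabs_right; lra.
have hBi : Rlt R0 (Rinv B) by apply Rinv_0_lt_compat; lra.
have [k hk] := pow_lt_1_zero _ hRa _ hBi.
have := hk k (le_n k); rewrite Rabs_right; last by apply Rle_ge, pow_le; lra.
move=> hkB.
have hpk : Rlt R0 (pow (Rinv (INR p)) k) by apply pow_lt.
have hpk1 : Rle (pow (Rinv (INR p)) k) R1.
  have : Rmult (Rinv B) B = R1 by rewrite Rinv_l //; lra.
  nra.
exists ((p%:R : K) ^+ k); split.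
  by move=> hc; have := abs_pX hK k; rewrite hc (abs_0 hK); lra.
have hc : Rle (abs ((p%:R : K) ^+ k)) R1 by rewrite (abs_pX hK).
split.
  by apply: (robba_dom hp _ (ex_intro _ rx (conj grx hx)) (ex_intro _ rx (conj grx hx))); apply: (scale_abs_le _ hp hK hc).
move=> a; rewrite /cscale (pf_absM hK) (abs_pX hK).
have := hB a.
have hBB : Rle (Rmult (pow (Rinv (INR p)) k) B) R1.
  have : Rmult (Rinv B) B = R1 by rewrite Rinv_l //; lra.
  nra.
have := hge (x a); have := hge (x0 (negZd a)).
nra.
Qed.

Lemma pow_le1 s k : Rle R0 s -> Rle s R1 -> Rle (pow s k) R1.
Proof.
move=> h0 h1; elim: k => [|k IH] /=; first lra.
have := pow_le s k h0; nra.
Qed.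

Lemma pow_decr s (a b : nat) : Rle R0 s -> Rle s R1 -> (a <= b)%nat -> Rle (pow s b) (pow s a).
Proof.
move=> h0 h1 hab; rewrite -(subnKC hab) -plusE pow_add.
have := pow_le1 (b - a) h0 h1; have := pow_le s a h0; nra.
Qed.

Lemma abs_X p (K : fieldType) (abs : K -> R) : padic_field p abs ->
  forall (x : K) k, abs (x ^+ k) = pow (abs x) k.
Proof.
move=> hK x; elim=> [|k IH]; first by rewrite expr0 (abs1 hK).
by rewrite exprS (pf_absM hK) IH.
Qed.

Lemma fold_max_props (q : R) (rs : list R) :
  Rlt R0 q -> Rlt q R1 -> (forall rho, List.In rho rs -> Rlt rho R1) ->
  let s := List.fold_right Rmax q rs in
  Rlt R0 s /\ Rlt s R1 /\ forall rho, List.In rho rs -> Rle rho s.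
Proof.
move=> h0 h1; elim: rs => [|r rs IH] hin /=; first by split=> //; split.
have [i0 [i1 i2]] := IH (fun rho h => hin rho (or_intror h)).
have hr := hin r (or_introl erefl).
split; first by apply: Rlt_le_trans i0 _; apply: Rmax_r.
split; first by apply: Rmax_lub_lt.
move=> rho [<-|h]; first exact: Rmax_l.
by apply: Rle_trans (i2 _ h) _; apply: Rmax_r.
Qed.

Lemma root_radius p (m : nat) : prime p -> (0 < m)%nat ->
  exists r, good_radius p r /\ Rlt R0 r /\ Rlt r R1 /\ pow r (m.*2) = Rinv (INR p).
Proof.
move=> hp hm; have h2 := INR_p_ge2 hp; simpl in h2.
pose r := Rpower (INR p) (Ropp (Rinv (INR (m.*2)))).
have hr0 : Rlt R0 r by rewrite /r /Rpower; apply: exp_pos.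
have hm2 : Rlt R0 (INR (m.*2)) by apply: lt_0_INR; apply/ltP; rewrite -addnn ltn_addl.
have hpow : pow r (m.*2) = Rinv (INR p).
  rewrite -Rpower_pow // /r Rpower_mult.
  have -> : Rmult (Ropp (Rinv (INR (m.*2)))) (INR (m.*2)) = Ropp R1.
    by field; lra.
  by rewrite Rpower_Ropp Rpower_1 //; lra.
have hq0 : Rlt R0 (Rinv (INR p)) by apply Rinv_0_lt_compat; lra.
have hq1 : Rlt (Rinv (INR p)) R1.
  have : Rmult (Rinv (INR p)) (INR p) = R1 by rewrite Rinv_l //; lra.
  nra.
have hr1 : Rlt r R1.
  apply: Rnot_le_lt => hr; have := pow_R1_Rle r (m.*2) hr; lra.
have hmm : (2 <= m.*2)%nat by rewrite -addnn (leq_add hm hm).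
have hr2 : Rle (pow r (m.*2)) (pow r 2) by apply: pow_decr => //; lra.
exists r; split; last by [].
split.
  exists (Z.neg 1%positive), (m.*2); split; first by apply: leq_trans hmm.
  by rewrite hpow /= Rmult_1_r.
split=> //; rewrite -hpow; simpl in hr2; nra.
Qed.

Lemma x0_exists p (K : fieldType) (abs : K -> R) d (rs : list R) eps :
  prime p -> padic_field p abs -> Rlt R0 eps ->
  (forall rho, List.In rho rs -> good_radius p rho) ->
  exists x0 : coefs K d, in_Robba p abs x0 /\
    forall z : coefs K d, (forall a, ~~ nonneg a -> z a = 0) ->
      (forall a, Rle (Rmult (abs (x0 (negZd a))) (abs (z a))) R1) ->
      forall rho, List.In rho rs -> rho_ball abs rho eps z.
Proof.
move=> hp hK he hrs.
have h2 := INR_p_ge2 hp; simpl in h2.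
set pr := INR p in h2 *.
set q := Rinv pr.
have hq0 : Rlt R0 q by apply Rinv_0_lt_compat; lra.
have hqp : Rmult q pr = R1 by rewrite /q Rinv_l //; lra.
have hq1 : Rlt q R1 by nra.
have [s0 [s1 s2]] := fold_max_props hq0 hq1 (fun rho h => (good_pos hp (hrs rho h)).2).
set s := List.fold_right Rmax q rs in s0 s1 s2.
have hRs : Rlt (Rabs s) R1 by rewrite Rabs_right; lra.
have [N hN] := pow_lt_1_zero s hRs q hq0.
set m := N.+1.
have hsm : Rlt (pow s m) q.
  have := hN m (le_S _ _ (le_n N)); rewrite Rabs_right //; apply Rle_ge, pow_le; lra.
have hRq : Rlt (Rabs q) R1 by rewrite Rabs_right; lra.
have [j hj] := pow_lt_1_zero q hRq eps he.
have hqj : Rlt (pow q j) eps.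
  have := hj j (le_n j); rewrite Rabs_right //; apply Rle_ge, pow_le; lra.
have [r [gr [r0 [r1 hr]]]] := root_radius hp (ltn0Sn N).
rewrite -/m -/pr -/q in hr.
pose pK : K := p%:R.
have hpK : abs pK = q by rewrite /pK (pf_abs_p hK).
have hpK0 : pK <> 0 by move=> h; move: hpK; rewrite h (abs_0 hK); lra.
pose c : K := pK^-1 ^+ j.
have hc : abs c = pow pr j.
  rewrite /c (abs_X hK) (abs_inv hK) // hpK /q Rinv_inv //.
pose x0 : coefs K d := fun b => if nonneg (negZd b) then c * pK ^+ (divn (norm1 b) m) else 0.
have hx0 : forall a, nonneg a ->
    abs (x0 (negZd a)) = Rmult (pow pr j) (pow q (divn (norm1 a) m)).
  move=> a ha; rewrite /x0 negZdK ha norm1_neg (pf_absM hK) hc (abs_X hK) hpK //.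
have hprj : Rmult (pow q j) (pow pr j) = R1 by rewrite -Rpow_mult_distr hqp pow1.
exists x0; split.
  have C0 : Rlt R0 (Rmult (pow pr j) pr) by apply Rmult_lt_0_compat; [apply pow_lt|]; lra.
  have key : forall t, Rle r t -> forall b,
      Rle (Rmult (abs (x0 b)) (rpow_int t (degZ b))) (Rmult (Rmult (pow pr j) pr) (pow r (norm1 b))).
    move=> t hrt b.
    have hrn := pow_lt r (norm1 b) r0.
    case hnb: (nonneg (negZd b)); last first.
      rewrite /x0 hnb (abs_0 hK) Rmult_0_l.
      by apply: Rmult_le_pos; lra.
    have hb : b = negZd (negZd b) by rewrite negZdK.
    rewrite {1}hb (hx0 _ hnb) norm1_neg.
    rewrite [in degZ b]hb degZ_neg degZ_nonneg // rpow_negnat norm1_neg.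
    set n := norm1 b; set Q := divn n m.
    have hti : Rle (Rinv (pow t n)) (Rinv (pow r n)).
      by apply: Rinv_le_contravar => //; apply: pow_incr; lra.
    have hnQ : (n + n <= m.*2 * Q.+1)%nat.
      have := ltn_ceil n (ltn0Sn N); rewrite -/m -/Q => /ltnW h.
      by rewrite -addnn mulnDl mulnC leq_add.
    have e1 : Rle (pow q Q.+1) (Rmult (pow r n) (pow r n)).
      rewrite -hr -pow_mult -pow_add; apply: pow_decr => //; lra.
    have hri : Rmult (Rinv (pow r n)) (pow r n) = R1.
      rewrite Rinv_l; first reflexivity. apply: Rgt_not_eq; exact: hrn.
    have hqQ := pow_le q Q (Rlt_le _ _ hq0).
    have hpj := pow_lt pr j ltac:(lra).
    have hinv0 : Rlt R0 (Rinv (pow r n)) by apply Rinv_0_lt_compat.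
    have ht0 : Rle R0 (Rinv (pow t n)) by apply: Rlt_le; apply Rinv_0_lt_compat; apply pow_lt; lra.
    have e2 : Rle (pow q Q) (Rmult pr (Rmult (pow r n) (pow r n))).
      simpl in e1; nra.
    have e3 : Rle (Rmult (pow q Q) (Rinv (pow r n))) (Rmult pr (pow r n)).
      have := Rmult_le_compat_r _ _ _ (Rlt_le _ _ hinv0) e2.
      by rewrite Rmult_assoc (Rmult_assoc (pow r n)) (Rmult_comm (pow r n) (Rinv _)) hri Rmult_1_r.
    have e4 : Rle (Rmult (pow q Q) (Rinv (pow t n))) (Rmult pr (pow r n)).
      apply: Rle_trans e3; apply: Rmult_le_compat_l => //.
    rewrite Rmult_assoc (Rmult_assoc (pow pr j)).
    by apply: Rmult_le_compat_l => //; lra.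
  have tk : forall t, Rle r t -> tends0 (fun b => Rmult (abs (x0 b)) (rpow_int t (degZ b))).
    move=> t hrt eps' he'.
    have hRr : Rlt (Rabs r) R1 by rewrite Rabs_right; lra.
    have hpos : Rlt R0 (Rdiv eps' (Rmult (pow pr j) pr)) by apply Rdiv_lt_0_compat.
    have [N' hN'] := pow_lt_1_zero r hRr _ hpos.
    exists N' => b hb.
    have := hN' (norm1 b) ltac:(apply/leP; exact: ltnW).
    rewrite Rabs_right; last by apply Rle_ge, pow_le; lra.
    move=> hlt.
    apply: Rle_lt_trans (key t hrt b) _.
    have := Rmult_lt_compat_l _ _ _ C0 hlt.
    move: C0 hlt; set C := Rmult (pow pr j) pr => C0 hlt.
    have -> : Rmult C (Rdiv eps' C) = eps' by field; lra.
    done.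
  exists r; split => // r'' _ hr''.
  by split; apply: tk => //; apply: Rle_refl.
move=> z hz hb rho hin a.
have [rho0 rho1] := good_pos hp (hrs rho hin).
case hna: (nonneg a); last first.
  by rewrite hz ?hna // (abs_0 hK) Rmult_0_l; lra.
rewrite degZ_nonneg //=.
set n := norm1 a; set Q := divn n m.
have hb' := hb a; rewrite hx0 // -/n -/Q in hb'.
have e1 : Rle (pow rho n) (pow s n) by apply: pow_incr; split; [lra| exact: s2].
have e2 : Rle (pow s n) (pow s (m * Q)).
  apply: pow_decr; [lra|lra|]; rewrite mulnC; exact: leq_trunc_div.
have e3 : Rle (pow s (m * Q)) (pow q Q).
  rewrite pow_mult; apply: pow_incr; split; [apply: pow_le; lra| lra].
have hz0 := abs_ge0 hp hK (z a).
have hqQ := pow_le q Q (Rlt_le _ _ hq0).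
have hprj0 : Rlt R0 (pow pr j) by apply pow_lt; lra.
have hqj0 : Rlt R0 (pow q j) by apply pow_lt; lra.
have : Rle (Rmult (abs (z a)) (pow q Q)) (pow q j).
  have := Rmult_le_compat_l _ _ _ (Rlt_le _ _ hqj0) hb'.
  rewrite Rmult_1_r -!Rmult_assoc hprj Rmult_1_l; nra.
move=> hzq.
have : Rle (Rmult (abs (z a)) (pow rho n)) (Rmult (abs (z a)) (pow q Q)).
  apply: Rmult_le_compat_l => //; lra.
lra.
Qed.

Lemma csub_robba p (K : fieldType) (abs : K -> R) d (y x : coefs K d) :
  prime p -> padic_field p abs -> in_Robba p abs y -> in_Robba p abs x ->
  in_Robba p abs (csub y x).
Proof.
move=> hp hK hy hx; apply: (robba_dom hp _ hy hx) => a.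
rewrite /csub -(abs_opp hp hK (x a)); exact: (pf_ultra hK).
Qed.

Lemma D_vanish (K : fieldType) (abs : K -> R) d (y x : coefs K d) :
  in_D abs y -> in_D abs x -> forall a, ~~ nonneg a -> csub y x a = 0.
Proof. by move=> [hy _] [hx _] a ha; rewrite /csub hy // hx // subrr. Qed.

Theorem lemma5p10 (p : nat) (hp : prime p) (hodd : odd p)
  (K : fieldType) (abs : K -> R) (hK : padic_field p abs) (d : nat)
  (W : coefs K d -> Prop) (hW : forall x, W x -> in_D abs x) :
  D_subspace_open p abs W <-> frechet_open p abs W.
Proof.
have hge := abs_ge0 hp hK.
split.
  move=> [V [[hVR hVo] hWV]] x hWx.
  have hxD := hW x hWx.
  have hVx := (hWV x hxD).1 hWx.
  have [L [[hL [x0 [hx0 hLx0]]] hLV]] := hVo x hVx.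
  case: (hx0) => [r0 [gr0 h0]].
  have [_ t0] := h0 r0 gr0 (Rle_refl r0).
  have [M hM] := tends0_bound t0.
  have [r00 r01] := good_pos hp gr0.
  set M' := Rmax R1 M.
  have hM'1 : Rle R1 M' := Rmax_l _ _.
  have hM'0 : Rlt R0 M' by lra.
  exists (r0 :: nil), (Rinv M'); split; first by apply Rinv_0_lt_compat.
  split; first by move=> rho [<-|[]].
  move=> y hyD hball.
  apply/(hWV y hyD).2; apply: hLV; first exact: D_robba.
  apply: hLx0; split; first by apply: csub_robba => //; apply: D_robba.
  move=> a.
  case hna: (nonneg a); last first.
    by rewrite (D_vanish hyD hxD) ?hna // (abs_0 hK) Rmult_0_r; lra.
  have hb := hball r0 (or_introl erefl) a.
  rewrite degZ_nonneg //= in hb.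
  have hm := hM (negZd a); rewrite degZ_neg degZ_nonneg // rpow_negnat in hm.
  set n := norm1 a in hb hm.
  set A := abs (x0 (negZd a)) in hm *; set Z := abs (csub y x a) in hb *.
  have hA : Rle R0 A by apply: hge. have hZ : Rle R0 Z by apply: hge.
  have hu : Rlt R0 (pow r0 n) by apply pow_lt.
  set u := pow r0 n in hb hm hu.
  have hw : Rmult (Rinv u) u = R1 by rewrite Rinv_l //; apply: Rgt_not_eq.
  have hw0 : Rlt R0 (Rinv u) by apply Rinv_0_lt_compat.
  set w := Rinv u in hw hw0 hm.
  have -> : Rmult A Z = Rmult (Rmult A w) (Rmult Z u).
    transitivity (Rmult (Rmult A Z) (Rmult w u)); first by rewrite hw; ring.
    ring.
  have hMM : Rmult M' (Rinv M') = R1 by rewrite Rinv_r //; apply: Rgt_not_eq.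
  rewrite -hMM; apply: Rmult_le_compat => //.
  - by apply: Rmult_le_pos => //; lra.
  - by apply: Rmult_le_pos => //; lra.
  - by apply: Rle_trans hm _; apply: Rmax_r.
move=> hF.
pose P (w x0 : coefs K d) : Prop := forall y', in_D abs y' -> Lx0 p abs x0 (csub y' w) -> W y'.
pose V (y : coefs K d) : Prop := in_Robba p abs y /\ exists w x0, W w /\ in_Robba p abs x0 /\ P w x0 /\
                Lx0 p abs x0 (csub y w).
exists V; split.
  split; first by move=> x [].
  move=> v [hv [w [x0 [hw [hx0 [hP hL]]]]]].
  have hlat := Lx0_lattice hp hK hx0.
  exists (Lx0 p abs x0); split; first by split=> //; exists x0.
  move=> y hy hyv; split=> //; exists w, x0; do 3 split=> //.
  case: hlat => _ [_ [hadd _]].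
  have -> : csub y w = cadd (csub y v) (csub v w).
    by apply: functional_extensionality => a; rewrite /cadd /csub addrA subrK.
  exact: hadd.
move=> x hxD; split.
  move=> hWx; split; first exact: D_robba.
  have [rs [eps [he [hrs hball]]]] := hF x hWx.
  have [x0 [hx0 hz]] := x0_exists d hp hK he hrs.
  exists x, x0; do 3 split=> //.
    move=> y' hy' [hr hb]; apply: hball => // rho hin.
    apply: (hz _ _ hb _ hin); exact: (D_vanish hy' hxD).
  have -> : csub x x = @czero K d.
    by apply: functional_extensionality => a; rewrite /csub /czero subrr.
  by case: (Lx0_lattice hp hK hx0) => _ [].
move=> [_ [w [x0 [_ [_ [hP hL]]]]]].
exact: hP.
Qed.
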